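(* Let $\Phi$ be a real $N\times d$ matrix satisfying the Restricted Isometry Condition with parameters $(2n,\varepsilon)$, $\varepsilon = 0.03/\sqrt{\log n}$, let $v \ne 0$ be $n$-sparse, $x = \Phi v$, and consider an iteration of ROMP run on $x$ with sparsity level $n$, with $I$ the index set and $r\ne0$ the residual at the start of that iteration, $u = \Phi^* r$, and $J_0$ the set chosen in the regularization step of that iteration. Let $v_0 = v|_{\mathrm{supp}(v)\setminus I}$ (equal to $v$ on $\mathrm{supp}(v)\setminus I$, $0$ elsewhere). Then $\|u|_{J_0}\|_2 \ge \frac{0.32}{\sqrt{\log n}}\,\|v_0\|_2$.
   Context: A vector is $n$-sparse if it has at most $n$ nonzero coordinates. $\Phi$ satisfies the Restricted Isometry Condition with parameters $(m,\varepsilon)$ if $(1-\varepsilon)\|w\|_2 \le \|\Phi w\|_2 \le (1+\varepsilon)\|w\|_2$ for all $m$-sparse $w$. $y|_T$ is the restriction of $y$ to coordinates in $T$. ROMP with input $x$ and sparsity level $n$: Initialize $I=\emptyset$, $r=x$. Repeat until $r=0$: (Identify) $u=\Phi^*r$, choose a set $J$ of the $n$ biggest coordinates of $u$ in magnitude, or all nonzero coordinates of $u$, whichever set is smaller; (Regularize) among subsets $J_0\subset J$ with $|u(i)|\le 2|u(j)|$ for all $i,j\in J_0$, choose one maximizing $\|u|_{J_0}\|_2$; (Update) $I\leftarrow I\cup J_0$, $y=\operatorname{argmin}_{z\in\mathbb{R}^I}\|x-\Phi z\|_2$, $r=x-\Phi y$. Output $I$. *)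

(* Defs.v *)
From HB Require Import structures.
From mathcomp Require Import all_boot all_order all_algebra.
From mathcomp Require Import reals exp.
Set Implicit Arguments. Unset Strict Implicit. Unset Printing Implicit Defensive.
Import Order.TTheory GRing.Theory Num.Theory.
Local Open Scope ring_scope.

Section ROMP.
Variable R : realType.

Definition norm2 k (w : 'cV[R]_k) : R := Num.sqrt (\sum_(i < k) w i 0 ^+ 2).

Definition supp k (w : 'cV[R]_k) : {set 'I_k} := [set i | w i 0 != 0].

Definition restrict k (T : {set 'I_k}) (w : 'cV[R]_k) : 'cV[R]_k :=
  \col_i (if i \in T then w i 0 else 0).

Definition sparse k (m : nat) (w : 'cV[R]_k) : Prop := (#|supp w| <= m)%N.

Definition RIC N d (Phi : 'M[R]_(N, d)) (m : nat) (eps : R) : Prop :=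
  forall w : 'cV[R]_d, sparse m w ->
    (1 - eps) * norm2 w <= norm2 (Phi *m w) /\
    norm2 (Phi *m w) <= (1 + eps) * norm2 w.

Definition romp_identify d (n : nat) (u : 'cV[R]_d) (J : {set 'I_d}) : Prop :=
  #|J| = minn n #|supp u| /\ J \subset supp u /\
  (forall i j, i \in J -> j \notin J -> `|u j 0| <= `|u i 0|).

Definition comparable_on d (u : 'cV[R]_d) (J0 : {set 'I_d}) : Prop :=
  forall i j, i \in J0 -> j \in J0 -> `|u i 0| <= 2 * `|u j 0|.

Definition romp_regularize d (u : 'cV[R]_d) (J J0 : {set 'I_d}) : Prop :=
  J0 \subset J /\ comparable_on u J0 /\
  (forall J1 : {set 'I_d}, J1 \subset J -> comparable_on u J1 ->
     norm2 (restrict J1 u) <= norm2 (restrict J0 u)).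

Definition romp_update N d (Phi : 'M[R]_(N, d)) (x : 'cV[R]_N)
    (I J0 I' : {set 'I_d}) (r' : 'cV[R]_N) : Prop :=
  I' = I :|: J0 /\
  exists y : 'cV[R]_d, supp y \subset I' /\
    (forall z : 'cV[R]_d, supp z \subset I' ->
       norm2 (x - Phi *m y) <= norm2 (x - Phi *m z)) /\
    r' = x - Phi *m y.

Definition romp_step N d (Phi : 'M[R]_(N, d)) (n : nat) (x : 'cV[R]_N)
    (I : {set 'I_d}) (r : 'cV[R]_N) (I' : {set 'I_d}) (r' : 'cV[R]_N) : Prop :=
  r <> 0 /\
  exists J J0 : {set 'I_d},
    romp_identify n (Phi^T *m r) J /\
    romp_regularize (Phi^T *m r) J J0 /\
    romp_update Phi x I J0 I' r'.

Inductive romp_reach N d (Phi : 'M[R]_(N, d)) (n : nat) (x : 'cV[R]_N) :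
    {set 'I_d} -> 'cV[R]_N -> Prop :=
| romp_reach0 : romp_reach Phi n x set0 x
| romp_reachS I r I' r' :
    romp_reach Phi n x I r -> romp_step Phi n x I r I' r' ->
    romp_reach Phi n x I' r'.

End ROMP.

(* Main.v *)
Require Import Defs.
From HB Require Import structures.
From mathcomp Require Import all_boot all_order all_algebra.
From mathcomp Require Import reals exp.
From mathcomp Require Import lra ring.
Import Order.TTheory GRing.Theory Num.Theory.
Set Implicit Arguments. Unset Strict Implicit. Unset Printing Implicit Defensive.
Local Open Scope ring_scope.

Section Basics.
Variable R : realType.

Definition dot k (a b : 'cV[R]_k) : R := \sum_i a i 0 * b i 0.

Lemma dotC k (a b : 'cV[R]_k) : dot a b = dot b a.
Proof. by apply: eq_bigr => i _; rewrite mulrC. Qed.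

Lemma dotDl k (a b c : 'cV[R]_k) : dot (a + b) c = dot a c + dot b c.
Proof. by rewrite /dot -big_split; apply: eq_bigr => i _; rewrite !mxE mulrDl. Qed.

Lemma dotNl k (a c : 'cV[R]_k) : dot (- a) c = - dot a c.
Proof. by rewrite /dot -sumrN; apply: eq_bigr => i _; rewrite !mxE mulNr. Qed.

Lemma dotBl k (a b c : 'cV[R]_k) : dot (a - b) c = dot a c - dot b c.
Proof. by rewrite dotDl dotNl. Qed.

Lemma dotZl k (s : R) (a c : 'cV[R]_k) : dot (s *: a) c = s * dot a c.
Proof. by rewrite /dot mulr_sumr; apply: eq_bigr => i _; rewrite !mxE mulrA. Qed.

Lemma dotDr k (a b c : 'cV[R]_k) : dot c (a + b) = dot c a + dot c b.
Proof. by rewrite dotC dotDl !(dotC c). Qed.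
Lemma dotNr k (a c : 'cV[R]_k) : dot c (- a) = - dot c a.
Proof. by rewrite dotC dotNl dotC. Qed.
Lemma dotBr k (a b c : 'cV[R]_k) : dot c (a - b) = dot c a - dot c b.
Proof. by rewrite dotDr dotNr. Qed.
Lemma dotZr k (s : R) (a c : 'cV[R]_k) : dot c (s *: a) = s * dot c a.
Proof. by rewrite dotC dotZl dotC. Qed.

Lemma dot_mul N d (Phi : 'M[R]_(N, d)) (a : 'cV[R]_d) (b : 'cV[R]_N) :
  dot (Phi *m a) b = dot a (Phi^T *m b).
Proof.
rewrite /dot.
under eq_bigr do rewrite !mxE big_distrl.
rewrite exchange_big; apply: eq_bigr => j _ /=.
rewrite !mxE big_distrr; apply: eq_bigr => i _ /=.
by rewrite !mxE; ring.
Qed.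

Lemma dot_ge0 k (a : 'cV[R]_k) : 0 <= dot a a.
Proof. by apply: sumr_ge0 => i _; rewrite -expr2 sqr_ge0. Qed.

Lemma norm2E k (a : 'cV[R]_k) : norm2 a = Num.sqrt (dot a a).
Proof. by rewrite /norm2 /dot; congr Num.sqrt; apply: eq_bigr => i _; rewrite expr2. Qed.

Lemma norm2_sq k (a : 'cV[R]_k) : norm2 a ^+ 2 = dot a a.
Proof. by rewrite norm2E sqr_sqrtr // dot_ge0. Qed.

Lemma norm2_ge0 k (a : 'cV[R]_k) : 0 <= norm2 a.
Proof. by rewrite /norm2 sqrtr_ge0. Qed.

Lemma dot0_coord k (a : 'cV[R]_k) i : dot a a = 0 -> a i 0 = 0.
Proof.
move=> h; have : a i 0 * a i 0 <= 0.
  rewrite -h /dot (bigD1 i) //= lerDl; apply: sumr_ge0 => j _.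
  by rewrite -expr2 sqr_ge0.
by rewrite -expr2 => h2; apply/eqP; rewrite -sqrf_eq0 eq_le h2 sqr_ge0.
Qed.

Lemma dot0_vec k (a : 'cV[R]_k) : dot a a = 0 -> a = 0.
Proof. by move=> h; apply/matrixP => i j; rewrite ord1 mxE dot0_coord. Qed.

Lemma dot_self0 k (a b : 'cV[R]_k) : dot a a = 0 -> dot a b = 0.
Proof. by move=> /dot0_vec ->; rewrite /dot big1 // => i _; rewrite mxE mul0r. Qed.

Lemma CS k (a b : 'cV[R]_k) : dot a b <= norm2 a * norm2 b.
Proof.
set al := norm2 a; set be := norm2 b.
have ha : al ^+ 2 = dot a a by rewrite norm2_sq.
have hb : be ^+ 2 = dot b b by rewrite norm2_sq.
have al0 : 0 <= al by apply: norm2_ge0.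
have be0 : 0 <= be by apply: norm2_ge0.
have h := dot_ge0 (be *: a - al *: b).
rewrite !(dotBl, dotBr, dotZl, dotZr) (dotC b a) -ha -hb in h.
have [hp|hz] := ltP 0 (al * be); first nra.
have : al * be = 0 by apply/eqP; rewrite eq_le hz mulr_ge0.
move/eqP; rewrite mulf_eq0 => /orP [] /eqP h0.
  by rewrite dot_self0 ?mulr_ge0 // -ha h0 expr0n.
by rewrite dotC dot_self0 ?mulr_ge0 // -hb h0 expr0n.
Qed.

Lemma CSabs k (a b : 'cV[R]_k) : - dot a b <= norm2 a * norm2 b.
Proof.
rewrite -dotNr; apply: le_trans (CS _ _) _.
by rewrite !norm2E dotNl !dotNr opprK.
Qed.


Definition Esum d (u : 'cV[R]_d) (A : {set 'I_d}) : R := \sum_(i in A) u i 0 ^+ 2.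

Lemma Esum_ge0 d (u : 'cV[R]_d) A : 0 <= Esum u A.
Proof. by apply: sumr_ge0 => i _; rewrite sqr_ge0. Qed.

Lemma dot_restrict_self d (u : 'cV[R]_d) A : dot (restrict A u) (restrict A u) = Esum u A.
Proof.
rewrite /dot /Esum [RHS]big_mkcond /=; apply: eq_bigr => i _.
by rewrite !mxE; case: (i \in A); rewrite ?mul0r // expr2.
Qed.

Lemma norm2_restrict_sq d (u : 'cV[R]_d) A : norm2 (restrict A u) ^+ 2 = Esum u A.
Proof. by rewrite norm2_sq dot_restrict_self. Qed.

Lemma dot_restrict_l d (u : 'cV[R]_d) A : dot (restrict A u) u = Esum u A.
Proof.
rewrite /dot /Esum [RHS]big_mkcond /=; apply: eq_bigr => i _.
by rewrite !mxE; case: (i \in A); rewrite ?mul0r // expr2.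
Qed.

Lemma in_supp k (w : 'cV[R]_k) i : (i \in supp w) = (w i 0 != 0).
Proof. by rewrite /supp inE. Qed.

Lemma notin_supp k (w : 'cV[R]_k) i : i \notin supp w -> w i 0 = 0.
Proof. by rewrite in_supp negbK => /eqP. Qed.

Lemma supp_subP k (w : 'cV[R]_k) (A : {set 'I_k}) :
  (forall i, i \notin A -> w i 0 = 0) -> supp w \subset A.
Proof.
move=> h; apply/subsetP => i; rewrite in_supp; apply: contraR => hi.
by rewrite h.
Qed.

Lemma supp_zero k (w : 'cV[R]_k) (A : {set 'I_k}) i :
  supp w \subset A -> i \notin A -> w i 0 = 0.
Proof.
move=> h hi; apply: notin_supp; apply: contra hi; exact: (subsetP h).
Qed.

Lemma supp_restrict k (A : {set 'I_k}) (w : 'cV[R]_k) : supp (restrict A w) \subset A.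
Proof. by apply: supp_subP => i hi; rewrite mxE (negbTE hi). Qed.

Lemma supp_add k (a b : 'cV[R]_k) (A : {set 'I_k}) : supp a \subset A -> supp b \subset A ->
  supp (a + b) \subset A.
Proof.
by move=> ha hb; apply: supp_subP => i hi; rewrite mxE (supp_zero ha) // (supp_zero hb) // addr0.
Qed.

Lemma supp_opp k (a : 'cV[R]_k) (A : {set 'I_k}) : supp a \subset A -> supp (- a) \subset A.
Proof. by move=> ha; apply: supp_subP => i hi; rewrite mxE (supp_zero ha) // oppr0. Qed.

Lemma supp_sub k (a b : 'cV[R]_k) (A : {set 'I_k}) : supp a \subset A -> supp b \subset A ->
  supp (a - b) \subset A.
Proof. by move=> ha hb; apply: supp_add => //; apply: supp_opp. Qed.

Lemma supp_scale k (s : R) (a : 'cV[R]_k) (A : {set 'I_k}) : supp a \subset A -> supp (s *: a) \subset A.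
Proof. by move=> ha; apply: supp_subP => i hi; rewrite mxE (supp_zero ha) // mulr0. Qed.

Lemma supp_wid k (a : 'cV[R]_k) (A B : {set 'I_k}) : supp a \subset A -> A \subset B -> supp a \subset B.
Proof. exact: subset_trans. Qed.

Lemma sparse_sub k (w : 'cV[R]_k) (A : {set 'I_k}) m :
  supp w \subset A -> (#|A| <= m)%N -> sparse m w.
Proof. by move=> h hm; apply: leq_trans (subset_leq_card h) hm. Qed.

Lemma dot_disj k (a b : 'cV[R]_k) (A B : {set 'I_k}) :
  supp a \subset A -> supp b \subset B -> (forall i, i \in A -> i \notin B) ->
  dot a b = 0.
Proof.
move=> ha hb hAB; rewrite /dot big1 // => i _.
case: (boolP (i \in A)) => hi.
  by rewrite (supp_zero hb (hAB _ hi)) mulr0.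
by rewrite (supp_zero ha hi) mul0r.
Qed.

Lemma dot_restrict_r k (a u : 'cV[R]_k) (A : {set 'I_k}) :
  supp a \subset A -> dot a u = dot a (restrict A u).
Proof.
move=> ha; apply: eq_bigr => i _; rewrite mxE.
by case: (boolP (i \in A)) => hi //; rewrite (supp_zero ha hi) !mul0r.
Qed.

Lemma sqle (x y : R) : 0 <= x -> x <= y -> x ^+ 2 <= y ^+ 2.
Proof. move=> *; nra. Qed.

Lemma near_orth N d (Phi : 'M[R]_(N, d)) m e (hric : RIC Phi m e)
  (he0 : 0 <= e) (he1 : e <= 1) (a b : 'cV[R]_d) (A B : {set 'I_d}) :
  supp a \subset A -> supp b \subset B -> (forall i, i \in A -> i \notin B) ->
  (#|A :|: B| <= m)%N ->
  dot (Phi *m a) (Phi *m b) <= 2 * e * norm2 a * norm2 b.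
Proof.
move=> ha hb hAB hm.
set al := norm2 a; set be := norm2 b.
have hal : al ^+ 2 = dot a a by rewrite norm2_sq.
have hbe : be ^+ 2 = dot b b by rewrite norm2_sq.
have al0 : 0 <= al by apply: norm2_ge0.
have be0 : 0 <= be by apply: norm2_ge0.
have hab : dot a b = 0 by apply: (dot_disj ha hb hAB).
have hA : A \subset A :|: B by apply: subsetUl.
have hB : B \subset A :|: B by apply: subsetUr.
have sp : sparse m (be *: a + al *: b).
  apply: (sparse_sub _ hm); apply: supp_add; apply: supp_scale.
    exact: supp_wid ha hA.
  exact: supp_wid hb hB.
have sq : sparse m (be *: a - al *: b).
  apply: (sparse_sub _ hm); apply: supp_sub; apply: supp_scale.
    exact: supp_wid ha hA.
  exact: supp_wid hb hB.
have [_ hp] := hric _ sp.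
have [hq _] := hric _ sq.
have hp2 := sqle (norm2_ge0 _) hp.
have hq2 : ((1 - e) * norm2 (be *: a - al *: b)) ^+ 2 <= norm2 (Phi *m (be *: a - al *: b)) ^+ 2.
  by apply: sqle => //; apply: mulr_ge0; [lra | apply: norm2_ge0].
rewrite exprMn in hp2; rewrite exprMn in hq2.
rewrite !norm2_sq mulmxDr mulmxBr -!scalemxAr in hp2 hq2.
rewrite !(dotDl, dotDr, dotNl, dotNr, dotZl, dotZr) in hp2 hq2.
rewrite (dotC b a) hab (dotC (Phi *m b) (Phi *m a)) -hal -hbe in hp2 hq2.
set g := dot (Phi *m a) (Phi *m b) in hp2 hq2 *.
move: hp2 hq2; set X := dot (Phi *m a) (Phi *m a); set Y := dot (Phi *m b) (Phi *m b) => hp2 hq2.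
have h4 : al * be * (4 * g) <= al * be * (8 * e * (al * be)).
  nra.
have [hpos|hz] := ltP 0 (al * be).
  by rewrite ler_pM2l // in h4; nra.
have : al * be = 0 by apply/eqP; rewrite eq_le hz mulr_ge0.
move/eqP; rewrite mulf_eq0 => /orP [] /eqP h0.
  rewrite /g; have -> : a = 0 by apply: dot0_vec; rewrite -hal h0 expr0n.
  rewrite mulmx0 /dot big1; [nra | by move=> i _; rewrite mxE mul0r].
rewrite /g; have -> : b = 0 by apply: dot0_vec; rewrite -hbe h0 expr0n.
rewrite mulmx0 /dot big1; [nra | by move=> i _; rewrite !mxE mulr0].
Qed.


Lemma sqr_abs (x : R) : `|x| ^+ 2 = x ^+ 2.
Proof. by rewrite real_normK // num_real. Qed.

Lemma dot_sub_scale k (r b : 'cV[R]_k) (t : R) :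
  dot (r - t *: b) (r - t *: b) = dot r r - 2 * t * dot b r + t ^+ 2 * dot b b.
Proof.
rewrite !(dotDl, dotDr, dotNl, dotNr, dotZl, dotZr) (dotC r b); ring.
Qed.

Lemma ls_orth N d (Phi : 'M[R]_(N, d)) (x : 'cV[R]_N) (I : {set 'I_d}) y :
  supp y \subset I ->
  (forall z : 'cV[R]_d, supp z \subset I ->
       norm2 (x - Phi *m y) <= norm2 (x - Phi *m z)) ->
  forall a, supp a \subset I -> dot (Phi *m a) (x - Phi *m y) = 0.
Proof.
move=> hy hmin a ha.
set r := x - Phi *m y; set g := dot (Phi *m a) r; set q := dot (Phi *m a) (Phi *m a).
have q0 : 0 <= q by apply: dot_ge0.
set t := g / (q + 1).
have ht : t * (q + 1) = g by rewrite /t divfK // gt_eqF // ltr_wpDl.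
have := hmin (y + t *: a) (supp_add hy (supp_scale _ ha)).
move/(sqle (norm2_ge0 _)); rewrite !norm2_sq.
have -> : x - Phi *m (y + t *: a) = r - t *: (Phi *m a).
  by rewrite mulmxDr -scalemxAr /r opprD addrA.
rewrite dot_sub_scale -/g -/q.
move=> h.
have : t ^+ 2 * (q + 2) <= 0 by nra.
move=> h2.
have t2 : t ^+ 2 <= 0 by nra.
have t0 : t = 0 by apply/eqP; rewrite -sqrf_eq0 eq_le t2 sqr_ge0.
by rewrite -ht t0 mul0r.
Qed.

Lemma Esum_split d (u : 'cV[R]_d) (A B : {set 'I_d}) :
  Esum u A = Esum u (A :&: B) + Esum u (A :\: B).
Proof. by rewrite /Esum (big_setID B). Qed.

Lemma Esum_sub d (u : 'cV[R]_d) (A B : {set 'I_d}) :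
  A \subset B -> Esum u A <= Esum u B.
Proof.
move=> h; rewrite (Esum_split u B A) (setIidPr h) lerDl; exact: Esum_ge0.
Qed.

Lemma avg_le d (f g : 'I_d -> R) (A B : {set 'I_d}) :
  (forall i j, i \in A -> j \in B -> f i <= g j) -> (#|A| <= #|B|)%N ->
  (forall j, 0 <= g j) ->
  \sum_(i in A) f i <= \sum_(j in B) g j.
Proof.
move=> hfg hc hg.
have G0 : 0 <= \sum_(j in B) g j by apply: sumr_ge0.
case: (posnP #|B|) => hB.
  have hA : #|A| = 0%N by move: hc; rewrite hB leqn0 => /eqP.
  have -> : A = set0 by apply/eqP; rewrite -cards_eq0 hA.
  by rewrite big_set0.
set avg := (\sum_(j in B) g j) / #|B|%:R.
have hB' : 0 < #|B|%:R :> R by rewrite ltr0n.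
have hf : forall i, i \in A -> f i <= avg.
  move=> i hi; rewrite /avg ler_pdivlMr //.
  rewrite mulr_natr -sumr_const; apply: ler_sum => j hj; exact: hfg.
apply: le_trans (_ : \sum_(i in A) avg <= _).
  by apply: ler_sum.
rewrite sumr_const -[avg *+ _]mulr_natr.
have : #|A|%:R <= #|B|%:R :> R by rewrite ler_nat.
move=> hAB.
have e : (\sum_(j in B) g j) / #|B|%:R * #|B|%:R = \sum_(j in B) g j.
  by rewrite divfK // gt_eqF.
rewrite -e -/avg.
apply: ler_wpM2l => //; apply: divr_ge0 => //; exact: ltW.
Qed.

Lemma identify_card d n (u : 'cV[R]_d) J : romp_identify n u J -> (#|J| <= n)%N.
Proof. by case=> -> _; apply: geq_minl. Qed.

Lemma identify_bound d n (u : 'cV[R]_d) J (T : {set 'I_d}) :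
  romp_identify n u J -> (#|T| <= n)%N -> Esum u T <= Esum u J.
Proof.
move=> hJ hT; case: hJ => [hc [hsub hord]].
rewrite (Esum_split u T J) (Esum_split u J T) setIC lerD2l.
case: (leqP n #|supp u|) => hm.
- rewrite (minn_idPl hm) in hc; apply: avg_le.
  + move=> i j hi hj; move: hi hj; rewrite !inE => /andP [hiJ hiT] /andP [hjT hjJ].
    rewrite -[u i 0 ^+ 2]sqr_abs -[u j 0 ^+ 2]sqr_abs; apply: sqle => //; apply: hord => //.
  + have h1 := cardsID J T; have h2 := cardsID T J.
    rewrite setIC in h2; move: hT; rewrite -h1 -hc -h2 leq_add2l //.
  + move=> j; exact: sqr_ge0.
-
  have hm' : minn n #|supp u| = #|supp u| by apply/minn_idPr; exact: ltnW.
  rewrite hm' in hc.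
  have eJ : J = supp u by apply/eqP; rewrite eqEcard hsub hc leqnn.
  rewrite /Esum big1 ?Esum_ge0 // => i; rewrite !inE eJ => /andP [hi _].
  by rewrite (notin_supp hi) expr0n.
Qed.


Lemma cover (M x : R) K : 0 <= x -> x <= M ->
  x <= M / 2 ^+ K \/ exists2 k, (k < K)%N & (M / 2 ^+ k.+1 < x) && (x <= M / 2 ^+ k).
Proof.
move=> x0 xM; elim: K => [|K IH]; first by left; rewrite expr0 divr1.
case: IH => [h|[k hk hk2]].
  case: (lerP x (M / 2 ^+ K.+1)) => h2; first by left.
  by right; exists K => //; rewrite h2 h.
by right; exists k => //; apply: ltnW.
Qed.

Lemma Esum1 d (u : 'cV[R]_d) i : Esum u [set i] = u i 0 ^+ 2.
Proof. by rewrite /Esum big_set1. Qed.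

Lemma Esum_mkcond d (u : 'cV[R]_d) A :
  Esum u A = \sum_i (if i \in A then u i 0 ^+ 2 else 0).
Proof. by rewrite /Esum big_mkcond. Qed.

Lemma regularize_bound d n (u : 'cV[R]_d) J J0 K :
  romp_identify n u J -> romp_regularize u J J0 -> (4 * n <= 4 ^ K)%N ->
  3 * Esum u J <= 4 * K%:R * Esum u J0.
Proof.
move=> hJ [hsub0 [hcomp0 hmax]] hK.
set EJ := Esum u J; set E0 := Esum u J0; set M := Num.sqrt EJ.
have EJ0 : 0 <= EJ by apply: Esum_ge0.
have M0 : 0 <= M by apply: sqrtr_ge0.
have hM2 : M ^+ 2 = EJ by rewrite sqr_sqrtr.
have hMi : forall i, i \in J -> `|u i 0| <= M.
  move=> i hi; have : u i 0 ^+ 2 <= EJ.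
    by rewrite -Esum1; apply: Esum_sub; rewrite sub1set.
  rewrite -sqr_abs -hM2 => h; have := normr_ge0 (u i 0); nra.
pose A k := [set i in J | (M / 2 ^+ k.+1 < `|u i 0|) && (`|u i 0| <= M / 2 ^+ k)].
pose Rm := [set i in J | `|u i 0| <= M / 2 ^+ K].
have hA : forall k, Esum u (A k) <= E0.
  move=> k; rewrite -norm2_restrict_sq /E0 -norm2_restrict_sq.
  apply: sqle; first exact: norm2_ge0.
  apply: hmax.
    by apply/subsetP => i; rewrite inE => /andP [].
  move=> i j; rewrite !inE => /andP [_ /andP [hi1 hi2]] /andP [_ /andP [hj1 hj2]].
  have e2 : M / 2 ^+ k = 2 * (M / 2 ^+ k.+1).
    by rewrite exprS; field; apply: expf_neq0; rewrite pnatr_eq0.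
  apply: (le_trans hi2); rewrite e2; apply: ler_wpM2l => //; exact: ltW.
have hR : Esum u Rm <= EJ / 4.
  have h1 : Esum u Rm <= #|Rm|%:R * (M / 2 ^+ K) ^+ 2.
    rewrite mulr_natl -sumr_const /Esum; apply: ler_sum => i.
    rewrite inE => /andP [_ hi]; rewrite -sqr_abs; apply: sqle => //.
  have h2 : (#|Rm| <= n)%N.
    apply: leq_trans (identify_card hJ).
    by apply: subset_leq_card; apply/subsetP => i; rewrite inE => /andP [].
  have h3 : (#|Rm|%:R : R) <= n%:R by rewrite ler_nat.
  have h4 : 4 * n%:R <= (4 : R) ^+ K.
    by rewrite -natrX -(natrM R 4 n) ler_nat.
  have e4 : (M / 2 ^+ K) ^+ 2 * 4 ^+ K = EJ.
    rewrite expr_div_n -exprM mulnC exprM -hM2.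
    have -> : (2 : R) ^+ 2 = 4 by rewrite expr2; lra.
    by rewrite divfK // expf_neq0 // pnatr_eq0.
  set Y := (M / 2 ^+ K) ^+ 2 in h1 e4.
  have Y0 : 0 <= Y by apply: sqr_ge0.
  set X := (4 : R) ^+ K in h4 e4.
  have n0 : 0 <= (n%:R : R) by [].
  nra.
have hcov : EJ <= \sum_(k < K) Esum u (A k) + Esum u Rm.
  rewrite /EJ !Esum_mkcond.
  rewrite (eq_bigr (fun k : 'I_K => \sum_i (if i \in A k then u i 0 ^+ 2 else 0))); last by move=> k _; apply: Esum_mkcond.
  rewrite exchange_big /= -big_split /=.
  apply: ler_sum => i _.
  case: (boolP (i \in J)) => hiJ; last first.
    apply: addr_ge0; last by case: ifP => // _; apply: sqr_ge0.
    by apply: sumr_ge0 => k _; case: ifP => // _; apply: sqr_ge0.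
  case: (cover K (normr_ge0 (u i 0)) (hMi _ hiJ)) => [h|[k hk hk2]].
    have -> : i \in Rm by rewrite inE hiJ h.
    rewrite lerDr; apply: sumr_ge0 => k _; case: ifP => // _; apply: sqr_ge0.
  rewrite (bigD1 (Ordinal hk)) //= (_ : i \in A k = true); last by rewrite inE hiJ hk2.
  rewrite -addrA lerDl; apply: addr_ge0.
    by apply: sumr_ge0 => k' _; case: ifP => // _; apply: sqr_ge0.
  by case: ifP => // _; apply: sqr_ge0.
have hsum : \sum_(k < K) Esum u (A k) <= K%:R * E0.
  apply: le_trans (_ : \sum_(k < K) E0 <= _); first by apply: ler_sum => k _; apply: hA.
  by rewrite sumr_const card_ord mulr_natl.
lra.
Qed.


Lemma ln2_ge : 1 / 2 <= ln (2 : R).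
Proof.
have h := @le_ln1Dx R (- (1 / 2)).
have e : 1 + - (1 / 2) = (2 : R)^-1 by field.
rewrite e lnV in h; last by rewrite posrE.
have : -1 < - (1 / 2 : R) by lra.
move=> /h; lra.
Qed.

Lemma ln_nat_ge (a b : nat) : (0 < a)%N -> (a <= b)%N -> ln (a%:R : R) <= ln (b%:R).
Proof.
move=> ha hab; rewrite ler_ln ?posrE ?ltr0n ?ler_nat //.
exact: leq_trans hab.
Qed.

Lemma K_exists n : (2 <= n)%N -> exists K, (4 * n <= 4 ^ K)%N /\ (K%:R : R) <= 6 * ln (n%:R).
Proof.
move=> hn; set t := trunc_log 4 n.
have h1 : (4 ^ t <= n)%N by apply: trunc_logP => //; apply: leq_trans hn.
have h2 : (n < 4 ^ t.+1)%N by apply: trunc_log_ltn.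
exists t.+2; split.
  by rewrite (expnS 4 t.+1) leq_mul2l /=; apply: ltnW.
have l2 := ln2_ge.
have hln2 : ln (2%:R : R) <= ln (n%:R) by apply: ln_nat_ge.
have hl4 : ln (4 : R) = 2 * ln 2.
  have -> : (4 : R) = 2 * 2 by lra.
  by rewrite lnM ?posrE //; lra.
have hlt : ln (((4 ^ t)%N)%:R : R) <= ln (n%:R).
  by apply: ln_nat_ge => //; rewrite expn_gt0.
have hlt' : 2 * ln (2 : R) * t%:R <= ln (n%:R).
  by move: hlt; rewrite natrX lnXn // hl4 -[_ *+ t]mulr_natr.
have e2 : (t.+2%:R : R) = t%:R + 2 by rewrite -addn2 natrD.
rewrite e2.
case: (posnP t) => ht.
  rewrite ht /=; lra.
have : (1 : R) <= t%:R by rewrite ler1n.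
move: hlt' hln2; set L := ln (n%:R : R); set T := (t%:R : R); set l := ln (2 : R).
move=> h3 h4 h5; have l2c : 1 / 2 <= l by exact: l2.
have h6 : (2 * l - 1) * T >= 0 by apply: mulr_ge0; lra.
lra.
Qed.


Lemma cardU_le k (A B : {set 'I_k}) : (#|A :|: B| <= #|A| + #|B|)%N.
Proof. by rewrite cardsU leq_subr. Qed.

Lemma coord_dot k (u : 'cV[R]_k) i :
  dot (\col_j ((j == i)%:R : R)) u = u i 0 /\ supp (\col_j ((j == i)%:R : R)) \subset [set i].
Proof.
split.
  rewrite /dot (bigD1 i) //= big1 => [|j hj]; first by rewrite !mxE eqxx mul1r addr0.
  by rewrite !mxE (negbTE hj) mul0r.
apply: supp_subP => j; rewrite inE => hj; by rewrite mxE (negbTE hj).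
Qed.

Definition good N d (Phi : 'M[R]_(N, d)) (v : 'cV[R]_d) (I : {set 'I_d}) (r : 'cV[R]_N) :=
  [/\ exists y, supp y \subset I /\ r = Phi *m v - Phi *m y,
      forall a, supp a \subset I -> dot (Phi *m a) r = 0 &
      (#|I :\: supp v| <= #|I :&: supp v|)%N].

End Basics.



Section Step.
Variable R : realType.

Lemma dot_sub_sq k (a b : 'cV[R]_k) : dot (a - b) (a - b) = dot a a - 2 * dot a b + dot b b.
Proof. rewrite !(dotDl, dotDr, dotNl, dotNr) (dotC b a); ring. Qed.

Lemma ar0 (e lnn : R) : 0 <= e -> e ^+ 2 * lnn = 9 / 10000 -> 1 / 2 <= lnn -> e <= 17 / 400.
Proof. move=> *; nra. Qed.
Lemma ar1 (e : R) : 0 <= e -> e <= 17 / 400 -> 9168 / 10000 <= (1 - e) ^+ 2.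
Proof. move=> *; nra. Qed.
Lemma ar2 (e : R) : 0 <= e -> e <= 17 / 400 -> 8405 / 10000 <= (1 - e) ^+ 4.
Proof.
move=> h0 h1; have h := ar1 h0 h1.
have -> : (1 - e) ^+ 4 = ((1 - e) ^+ 2) ^+ 2 by rewrite -exprM.
move: h; set q := (1 - e) ^+ 2 => h; nra.
Qed.

Lemma step_main N d n (Phi : 'M[R]_(N, d)) (v : 'cV[R]_d) (e lnn : R)
  (hric : RIC Phi (2 * n)%N e) (he0 : 0 <= e) (hel : e ^+ 2 * lnn = 9 / 10000)
  (hln : 1 / 2 <= lnn)
  (hK : exists K, (4 * n <= 4 ^ K)%N /\ (K%:R : R) <= 6 * lnn)
  (hvs : sparse n v) (I : {set 'I_d}) (r : 'cV[R]_N) (hg : good Phi v I r)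
  (J J0 : {set 'I_d})
  (hJ : romp_identify n (Phi^T *m r) J)
  (hJ0 : romp_regularize (Phi^T *m r) J J0) :
  [/\ 1024 * dot (restrict (supp v :\: I) v) (restrict (supp v :\: I) v)
        <= 10000 * lnn * Esum (Phi^T *m r) J0,
      (#|J0 :\: supp v| <= #|J0 :&: supp v|)%N &
      forall i, i \in J0 -> i \notin I].
Proof.
case: hg => [[y [hy hr]] horth hcnt].
set u := Phi^T *m r.
set S := supp v.
set T' := S :\: I.
set v0 := restrict T' v.
set z := y - restrict (S :&: I) v.
set w := v0 - z.
have e1 : e <= 17 / 400 by apply: ar0 hel hln.
have he1 : e <= 1 by clear - e1; lra.
have he1' : 0 <= 1 - e by clear - e1; lra.
have he1p : 0 <= 1 + e by clear - he0; lra.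
have hlnp : 0 < lnn by clear - hln; lra.
have hS : (#|S| <= n)%N by [].
have hIS : (#|I :|: S| <= 2 * n)%N.
  have h1 := cardsID S I.
  have -> : I :|: S = (I :\: S) :|: S.
    apply/setP => i; rewrite !in_setU !in_setD; by case: (i \in I); case: (i \in S).
  apply: leq_trans (cardU_le _ _) _.
  rewrite mul2n -addnn; apply: leq_add => //.
  apply: leq_trans hcnt _; rewrite setIC; apply: leq_trans hS.
  by apply: subset_leq_card; apply: subsetIl.
have hI2 : (#|I| <= 2 * n)%N.
  by apply: leq_trans hIS; apply: subset_leq_card; apply: subsetUl.
have hT'n : (#|T'| <= n)%N.
  by apply: leq_trans hS; apply: subset_leq_card; apply: subsetDl.
have sz : supp z \subset I.
  apply: supp_sub => //; apply: supp_wid (supp_restrict _ _) _; exact: subsetIr.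
have sv0 : supp v0 \subset T' by apply: supp_restrict.
have dT'I : forall i, i \in T' -> i \notin I by move=> i; rewrite inE => /andP [].
have hw : r = Phi *m w.
  rewrite hr -mulmxBr; congr (_ *m _).
  apply/matrixP => i j; rewrite ord1 !mxE /T' in_setD in_setI.
  case: (boolP (i \in S)) => hiS; case: (boolP (i \in I)) => hiI /=; try ring.
  1,2: by rewrite (notin_supp hiS); ring.
have hz0 : dot (Phi *m z) r = 0 by apply: horth.
have hPw : Phi *m w = Phi *m v0 - Phi *m z by rewrite /w; apply: mulmxBr.
have hF5 : dot v0 u = dot r r.
  rewrite -dot_mul.
  have -> : v0 = w + z by rewrite /w subrK.
  by rewrite mulmxDr dotDl -hw hz0 addr0.
set nu := norm2 v0.
have hnu : nu ^+ 2 = dot v0 v0 by rewrite norm2_sq.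
have nu0 : 0 <= nu by apply: norm2_ge0.
have hww : dot w w = dot v0 v0 + dot z z.
  have dvz : dot v0 z = 0 by apply: (dot_disj sv0 sz dT'I).
  by rewrite /w dot_sub_sq dvz; ring.
have hrr : (1 - e) ^+ 2 * dot v0 v0 <= dot r r.
  have sw : sparse (2 * n) w.
    apply: sparse_sub hIS; apply: supp_sub.
      apply: supp_wid sv0 _; apply/subsetP => i; rewrite !inE => /andP [_ ->]; by rewrite orbT.
    apply: supp_wid sz _; exact: subsetUl.
  have [hl _] := hric _ sw.
  have := sqle (mulr_ge0 _ (norm2_ge0 w)) hl.
  rewrite exprMn !norm2_sq -hw hww => h.
  have := dot_ge0 z; have : 0 <= (1 - e) ^+ 2 by apply: sqr_ge0.
  move=> h1 h2.
  have h4 := h he1'; apply: le_trans h4; rewrite ler_wpM2l // lerDl; exact: dot_ge0.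
set NT' := norm2 (restrict T' u).
have hNT' : NT' ^+ 2 = Esum u T' by rewrite norm2_restrict_sq.
have hET' : (1 - e) ^+ 4 * nu ^+ 2 <= Esum u T'.
  have hcs : dot v0 u <= nu * NT'.
    rewrite (dot_restrict_r _ sv0); exact: CS.
  have NT0 : 0 <= NT' by apply: norm2_ge0.
  rewrite hF5 -hnu in hcs hrr.
  have h1 : (1 - e) ^+ 2 * nu ^+ 2 <= nu * NT' by apply: le_trans hrr hcs.
  have h2 : (1 - e) ^+ 2 * nu <= NT'.
    have [hp|hz] := ltP 0 nu.
      by rewrite -(ler_pM2l hp) mulrCA -expr2.
    have -> : nu = 0 by apply/eqP; rewrite eq_le hz nu0.
    by rewrite mulr0.
  rewrite -hNT'; have : 0 <= (1 - e) ^+ 2 * nu by apply: mulr_ge0 => //; apply: sqr_ge0.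
  move=> h3; have := sqle h3 h2; rewrite exprMn -exprM //.
have hEJ : Esum u T' <= Esum u J by apply: identify_bound hJ hT'n.
have [K [hK4 hK6]] := hK.
have hreg : 3 * Esum u J <= 4 * K%:R * Esum u J0 := regularize_bound hJ hJ0 hK4.
set E0 := Esum u J0.
have E00 : 0 <= E0 by apply: Esum_ge0.
have hA : 1024 * dot v0 v0 <= 10000 * lnn * E0.
  rewrite -hnu.
  have h2 : (1 - e) ^+ 4 >= 8405 / 10000 by apply: ar2.
  have h3 : 3 * ((1 - e) ^+ 4 * nu ^+ 2) <= 4 * K%:R * E0 by rewrite /E0; clear - hET' hEJ hreg; lra.
  have h4 : 4 * K%:R * E0 <= 4 * (6 * lnn) * E0.
    by apply: ler_wpM2r => //; apply: ler_wpM2l.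
  have h5 : 8405 / 10000 * nu ^+ 2 <= (1 - e) ^+ 4 * nu ^+ 2.
    by apply: ler_wpM2r => //; apply: sqr_ge0.
  have h6 : 0 <= lnn * E0 by apply: mulr_ge0 => //; exact: ltW.
  have h7 : 0 <= nu ^+ 2 by apply: sqr_ge0.
  clear - h2 h3 h4 h5 h6 h7; lra.
case: hJ0 => [hJ0J [hcomp hmax]].
case: (hJ) => [_ [hJsupp _]].
have hJ0s : forall i, i \in J0 -> u i 0 != 0.
  move=> i hi; rewrite -in_supp; apply: (subsetP hJsupp); exact: (subsetP hJ0J).
have hC : forall i, i \in J0 -> i \notin I.
  move=> i hi; apply/negP => hiI.
  have [hd hs] := coord_dot u i.
  have : dot (Phi *m (\col_j ((j == i)%:R : R))) r = 0.
    apply: horth; apply: supp_wid hs _; by rewrite sub1set.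
  rewrite dot_mul -/u hd => /eqP; apply/negP; exact: hJ0s.
split => //.
set T := J0 :\: S.
set t := restrict T u.
have hTI : forall i, i \in T -> i \notin I.
  move=> i; rewrite inE => /andP [_ hi]; exact: hC.
have hTT' : forall i, i \in T -> i \notin T'.
  move=> i; rewrite !inE => /andP [hi _]; apply/negP => /andP [_ hiS]. by rewrite hiS in hi.
have hTn : (#|T| <= n)%N.
  apply: leq_trans (identify_card hJ); apply: subset_leq_card.
  apply: subset_trans hJ0J; exact: subsetDl.
have st : supp t \subset T by apply: supp_restrict.
set NT := norm2 t.
have NT0 : 0 <= NT by apply: norm2_ge0.
have hNT : NT ^+ 2 = Esum u T by rewrite norm2_restrict_sq.
set zeta := norm2 (Phi *m z).
have ze0 : 0 <= zeta by apply: norm2_ge0.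
set nz := norm2 z.
have nz0 : 0 <= nz by apply: norm2_ge0.
have hzeta2 : zeta ^+ 2 = dot (Phi *m z) (Phi *m v0).
  rewrite norm2_sq; move: hz0; rewrite hw hPw dotBr.
  move=> h; apply/eqP; rewrite eq_le; apply/andP; split; clear - h; lra.
have hzo : dot (Phi *m z) (Phi *m v0) <= 2 * e * nz * nu.
  have dIT' : forall i, i \in I -> i \notin T'.
    by move=> i hi; apply/negP => /dT'I; rewrite hi.
  move: (near_orth hric he0 he1 sz sv0 dIT') => H; rewrite -/nz -/nu in H; apply: H.
  apply: leq_trans hIS; apply: subset_leq_card; apply: setUS; exact: subsetDl.
have hzl : (1 - e) * nz <= zeta.
  have sz2 : sparse (2 * n) z by apply: sparse_sub sz hI2.
  by rewrite /nz /zeta; have [] := hric _ sz2.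
have hzeta : (1 - e) * zeta <= 2 * e * nu.
  have [hp|hz] := ltP 0 zeta.
    have a1 : (1 - e) * zeta ^+ 2 <= (1 - e) * (2 * e * nz * nu).
      by apply: ler_wpM2l => //; rewrite hzeta2.
    have a2 : (2 * e * nu) * ((1 - e) * nz) <= (2 * e * nu) * zeta.
      by apply: ler_wpM2l => //; clear - he0 nu0; nra.
    have : (1 - e) * zeta * zeta <= 2 * e * nu * zeta.
      by rewrite expr2 in a1; clear - a1 a2; lra.
    by rewrite ler_pM2r.
  have -> : zeta = 0 by apply/eqP; rewrite eq_le hz ze0.
  have h0 : 0 <= e * nu by apply: mulr_ge0.
  rewrite mulr0; clear - h0; lra.
have hET : Esum u T = dot (Phi *m t) (Phi *m v0) - dot (Phi *m t) (Phi *m z).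
  by rewrite -dot_restrict_l -/t /u -dot_mul hw hPw dotBr.
have htv : dot (Phi *m t) (Phi *m v0) <= 2 * e * NT * nu.
  move: (near_orth hric he0 he1 st sv0 hTT') => H; rewrite -/NT -/nu in H; apply: H.
  apply: leq_trans (cardU_le _ _) _; rewrite mul2n -addnn; exact: leq_add.
have htz : - dot (Phi *m t) (Phi *m z) <= (1 + e) * NT * zeta.
  rewrite /NT /zeta; apply: le_trans (CSabs _ _) _; apply: ler_wpM2r; first exact: norm2_ge0.
  have st2 : sparse (2 * n) t by apply: sparse_sub st _; apply: leq_trans hTn _; rewrite leq_pmull.
  by have [] := hric _ st2.
have hNTb : (1 - e) * NT <= 4 * e * nu.
  have h1 : NT ^+ 2 <= 2 * e * NT * nu + (1 + e) * NT * zeta by clear - hET htv htz hNT; lra.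
  have [hp|hz] := ltP 0 NT.
    have h2 : NT <= 2 * e * nu + (1 + e) * zeta.
      have : NT * NT <= NT * (2 * e * nu + (1 + e) * zeta) by rewrite -expr2; clear - h1; lra.
      by rewrite ler_pM2l.
    have a1 : (1 - e) * NT <= (1 - e) * (2 * e * nu + (1 + e) * zeta).
      by apply: ler_wpM2l.
    have a2 : (1 + e) * ((1 - e) * zeta) <= (1 + e) * (2 * e * nu).
      by apply: ler_wpM2l.
    clear - a1 a2; lra.
  have -> : NT = 0 by apply/eqP; rewrite eq_le hz NT0.
  have h0 : 0 <= e * nu by apply: mulr_ge0.
  rewrite mulr0; clear - h0; lra.
have h5 : (1 - e) ^+ 2 * NT ^+ 2 <= 16 * e ^+ 2 * nu ^+ 2.
  have := sqle (mulr_ge0 he1' NT0) hNTb.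
  by rewrite !exprMn (_ : (4 : R) ^+ 2 = 16) // expr2 -natrM.
have h7 : (1 - e) ^+ 2 * NT ^+ 2 <= 144 / 1024 * E0.
  have h6 : lnn * (16 * e ^+ 2 * nu ^+ 2) = 144 / 10000 * nu ^+ 2.
    transitivity (16 * nu ^+ 2 * (e ^+ 2 * lnn)); first by ring.
    by rewrite hel; ring.
  rewrite -(ler_pM2l hlnp).
  apply: le_trans (_ : lnn * (16 * e ^+ 2 * nu ^+ 2) <= _).
    by rewrite ler_pM2l.
  have hA' := hA; rewrite -hnu in hA'.
  rewrite h6; clear - hA'; lra.
have h1e : (1 - e) ^+ 2 >= 9168 / 10000 by apply: ar1.
have h8 : 5 * Esum u T <= E0.
  rewrite -hNT; move: h7 h1e; set q := (1 - e) ^+ 2; set X := NT ^+ 2.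
  have X0 : 0 <= X by apply: sqr_ge0.
  move=> h7 h1e.
  have h9 : 9168 / 10000 * X <= q * X by apply: ler_wpM2r.
  clear - h7 h9 E00; lra.
have hsplit : E0 = Esum u (J0 :&: S) + Esum u T by rewrite /E0 (Esum_split u J0 S).
have hdbl : #|T|%:R * Esum u (J0 :&: S) <= 4 * #|J0 :&: S|%:R * Esum u T.
  have : \sum_(i in T) Esum u (J0 :&: S) <= \sum_(i in T) (4 * #|J0 :&: S|%:R * u i 0 ^+ 2).
    apply: ler_sum => i hi.
    rewrite /Esum; apply: le_trans (_ : \sum_(j in J0 :&: S) (4 * u i 0 ^+ 2) <= _).
      apply: ler_sum => j hj.
      have hj0 : j \in J0 by move: hj; rewrite inE => /andP [].
      have hi0 : i \in J0 by move: hi; rewrite inE => /andP [].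
      have := hcomp j i hj0 hi0 => h.
      rewrite -[u j 0 ^+ 2]sqr_abs -[u i 0 ^+ 2]sqr_abs.
      have := sqle (normr_ge0 _) h; rewrite exprMn (_ : (2 : R) ^+ 2 = 4) //.
      by rewrite expr2 -natrM.
    by rewrite sumr_const -[_ *+ #|_|]mulr_natr mulrAC lexx.
  rewrite sumr_const -mulr_sumr => h; rewrite [#|T|%:R * _]mulr_natl; apply: (le_trans h); exact: lexx.
have hET0 : 0 <= Esum u T by apply: Esum_ge0.
have [hp|hz] := ltP 0 (Esum u T).
  have h9 : #|T|%:R * (4 * Esum u T) <= #|J0 :&: S|%:R * (4 * Esum u T).
    apply: le_trans (_ : #|T|%:R * Esum u (J0 :&: S) <= _).
      apply: ler_wpM2l => //; clear - hsplit h8; lra.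
    clear - hdbl; lra.
  have h4 : 0 < 4 * Esum u T by rewrite mulr_gt0.
  by rewrite ler_pM2r // ler_nat in h9.
have hT0 : #|T| = 0%N.
  apply/eqP; rewrite cards_eq0; apply/eqP/setP => i; rewrite in_set0.
  apply/negbTE/negP => hi.
  have : u i 0 ^+ 2 <= 0.
    apply: le_trans hz; rewrite -Esum1; apply: Esum_sub; by rewrite sub1set.
  have hi0 : i \in J0 by move: hi; rewrite inE => /andP [].
  have := hJ0s _ hi0; rewrite -sqrf_eq0 => hne h.
  by move: hne; rewrite eq_le h sqr_ge0.
by rewrite hT0.
Qed.

End Step.



Section Final.
Variable R : realType.

Lemma good0 N d (Phi : 'M[R]_(N, d)) (v : 'cV[R]_d) : good Phi v set0 (Phi *m v).
Proof.
split.
- exists 0; split; first by apply: supp_subP => i _; rewrite mxE.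
  by rewrite mulmx0 subr0.
- move=> a ha; have -> : a = 0.
    by apply/matrixP => i j; rewrite ord1 mxE; apply: (supp_zero ha); rewrite in_set0.
  by rewrite mulmx0 /dot big1 // => i _; rewrite mxE mul0r.
- by rewrite set0D cards0.
Qed.

Lemma reach_good N d n (Phi : 'M[R]_(N, d)) (v : 'cV[R]_d) (e lnn : R)
  (hric : RIC Phi (2 * n)%N e) (he0 : 0 <= e) (hel : e ^+ 2 * lnn = 9 / 10000)
  (hln : 1 / 2 <= lnn)
  (hK : exists K, (4 * n <= 4 ^ K)%N /\ (K%:R : R) <= 6 * lnn)
  (hvs : sparse n v) I r :
  romp_reach Phi n (Phi *m v) I r -> good Phi v I r.
Proof.
elim=> [|I0 r0 I' r' _ IH [_ [J [J0 [hJ [hJ0 [hI' [y [hy [hmin hr']]]]]]]]]].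
  exact: good0.
have [_ hB hC] := step_main hric he0 hel hln hK hvs IH hJ hJ0.
case: IH => _ _ hcnt.
split.
- by exists y; split => //; rewrite hr' mulmxBr.
- by rewrite hr'; apply: ls_orth hy hmin.
- rewrite hI' setDUl setIUl.
  apply: leq_trans (cardU_le _ _) _.
  have hdis : (I0 :&: supp v) :&: (J0 :&: supp v) = set0.
    apply/setP => i; rewrite !inE.
    case: (boolP (i \in J0)) => hi; last by rewrite !andbF.
    by rewrite (negbTE (hC _ hi)).
  rewrite cardsU hdis cards0 subn0.
  exact: leq_add.
Qed.

End Final.

Unset Implicit Arguments.

Theorem lemma3p8 (R : realType) (N d n : nat) (Phi : 'M[R]_(N, d))
    (v : 'cV[R]_d)
    (hRIC : RIC Phi (2 * n)%N ((3%:R / 100%:R) / Num.sqrt (ln (n%:R : R))))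
    (hv0 : v != 0) (hvs : sparse n v)
    (I : {set 'I_d}) (r : 'cV[R]_N)
    (hreach : romp_reach Phi n (Phi *m v) I r) (hr0 : r != 0)
    (J J0 : {set 'I_d})
    (hJ : romp_identify n (Phi^T *m r) J)
    (hJ0 : romp_regularize (Phi^T *m r) J J0) :
  norm2 (restrict J0 (Phi^T *m r)) >=
    ((32%:R / 100%:R) / Num.sqrt (ln (n%:R : R))) *
      norm2 (restrict (supp v :\: I) v).
Proof.
have hb0 : 0 <= norm2 (restrict J0 (Phi^T *m r)) by apply: norm2_ge0.
case: (leqP 2 n) => hn; last first.
  move: hn; rewrite ltnS leq_eqVlt ltnS leqn0 => /orP [] /eqP hn.
    by rewrite hn ln1 sqrtr0 invr0 mulr0 mul0r.
  have -> : supp v = set0.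
    by apply/eqP; rewrite -cards_eq0 -leqn0 -hn.
  have -> : norm2 (restrict (set0 :\: I) v) = 0.
    rewrite norm2E /dot big1 ?sqrtr0 // => i _.
    by rewrite mxE set0D in_set0 mul0r.
  by rewrite mulr0.
set lnn := ln (n%:R : R).
have hln2 : ln (2%:R : R) <= lnn by apply: ln_nat_ge.
have hln : 1 / 2 <= lnn by apply: le_trans (ln2_ge R) hln2.
have hlnp : 0 < lnn by apply: lt_le_trans hln; rewrite divr_gt0.
set s := Num.sqrt lnn.
have hs2 : s ^+ 2 = lnn by rewrite sqr_sqrtr // ltW.
have hsp : 0 < s by rewrite sqrtr_gt0.
set e := (3%:R / 100%:R) / s.
have he0 : 0 <= e by apply: divr_ge0; [apply: divr_ge0; apply: ler0n | exact: ltW].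
have hel : e ^+ 2 * lnn = 9 / 10000.
  rewrite /e -hs2; field; by rewrite gt_eqF.
have hK := K_exists R hn.
have hg := reach_good hRIC he0 hel hln hK hvs hreach.
have [hA _ _] := step_main hRIC he0 hel hln hK hvs hg hJ hJ0.
set nu := norm2 (restrict (supp v :\: I) v).
have nu0 : 0 <= nu by apply: norm2_ge0.
have hnu : nu ^+ 2 = dot (restrict (supp v :\: I) v) (restrict (supp v :\: I) v) by rewrite norm2_sq.
set b := norm2 (restrict J0 (Phi^T *m r)).
have hb2 : b ^+ 2 = Esum (Phi^T *m r) J0 by rewrite norm2_restrict_sq.
set a := 32%:R / 100%:R / s * nu.
have a0 : 0 <= a by apply: mulr_ge0 => //; apply: divr_ge0; [apply: divr_ge0; apply: ler0n | exact: ltW].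
have ha : a ^+ 2 * lnn = 1024 / 10000 * nu ^+ 2.
  rewrite /a -hs2; field; by rewrite gt_eqF.
rewrite -hnu -hb2 in hA.
have h1 : a ^+ 2 * lnn <= b ^+ 2 * lnn.
  rewrite ha; move: hA; clear - hlnp; set X := b ^+ 2; set Y := nu ^+ 2 => hA.
  lra.
rewrite ler_pM2r // in h1.
have b0 : 0 <= b by apply: norm2_ge0.
clearbody a b; clear - a0 b0 h1; nra.
Qed.
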